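(* Let $r\ge1$. The assignment \[ (i)\mapsto e_i,\qquad (i-1|i)\mapsto c_i^{\leftarrow},\qquad (i+1|i)\mapsto c_{i+1}^{\rightarrow},\qquad \theta\mapsto \omega \] defines an isomorphism of $\mathbb Z\times\mathbb Z^2$-graded algebras $\mathcal A^!_r\cong T_1^{\lambda,r}$. Moreover it induces isomorphisms of dg-algebras $(\mathcal A^!_r,0)\cong(T_1^{\lambda,r},0)$ and $(\mathcal A^!_r,d)\cong(T_1^{\lambda,r},d_1)$.
   Context: $\Bbbk$ is a field. $\mathcal Q_r$ is the quiver with vertices $0,1,\dots,r$, arrows $i|i+1:i\to i+1$ and $i+1|i:i+1\to i$ for $0\le i<r$, and a loop $\theta$ at $0$; $(i_1|\cdots|i_n)$ denotes the path through $i_1,\dots,i_n$ and $(i)$ the constant path. $\mathcal A^!_r$ is the quotient of the path algebra $\Bbbk\mathcal Q_r$ by $(i|i-1|i)=(i|i+1|i)$ for $0<i<r$, $\theta(0|1|0)=(0|1|0)\theta$, $\theta^2=0$; it is graded by (homological, $q$, $\lambda$)-degrees $\deg(i|i\pm1)=(0,1,0)$, $\deg\theta=(1,0,2)$. The differential $d$ on $\mathcal A^!_r$ is $d(\theta)=(0|1|0)$ and $d=0$ on the other generators. $T_1^{\lambda,r}$ is the dg-enhanced KLRW algebra with one black strand and $r$ red strands labelled $1$: braid-like diagrams (bottom to top; product = stacking) with a leftmost vertical blue strand $\lambda$, $r$ non-crossing red strands and one black strand which may cross red strands, carry dots, and, when it is immediately right of the blue strand, be nailed on the blue strand (nail: homological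 degree $1$), subject to: dots slide through black/red crossings; a black/red double crossing equals one dot on the black strand; a nailed strand's dot can slide through the nail; two consecutive nails on the strand give $0$. $(q,\lambda)$-degrees: dot $(2,0)$, black/red crossing $(1,0)$, nail $(0,2)$. The differential $d_1$ sends the nail to a dot and is zero on nail-free diagrams (graded Leibniz rule). In $T_1^{\lambda,r}$: $e_i$ is the idempotent with the black strand immediately right of the $i$-th red strand ($i=0$: immediately right of blue); $c_i^{\leftarrow}$ ($1\le i\le r$) is the diagram in which the black strand starts (bottom) right of the $i$-th red strand and ends (top) left of it, crossing it once; $c_{i+1}^{\rightarrow}$ ($0\le i<r$) is the diagram in which the black strand starts right of the $i$-th red strand and ends right of the $(i+1)$-th, crossing it once; $\omega$ is the nail on the black strand in idempotent $e_0$. *)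

(* Defs.v *)
From HB Require Import structures.
From mathcomp Require Import all_boot all_order all_algebra.
Set Implicit Arguments. Unset Strict Implicit. Unset Printing Implicit Defensive.
Import Order.TTheory GRing.Theory Num.Theory.
Local Open Scope ring_scope.

(* Z x Z^2 degrees: ((homological, q), lambda) *)
Definition tdeg := (int * int * int)%type.

Section Presentations.
Variable k : fieldType.

Definition is_alg_hom (B C : algType k) (f : B -> C) : Prop :=
  (forall (c : k) (x y : B), f (c *: x + y) = c *: f x + f y) /\
  f 1 = 1 /\ (forall x y : B, f (x * y) = f x * f y).

Definition word_val (B : algType k) (G : Type) (g : G -> B) (w : seq G) : B :=
  \prod_(s <- w) g s.

Definition wdeg (G : Type) (deg : G -> tdeg) (w : seq G) : tdeg :=
  foldr (fun s acc => (((deg s).1.1 + acc.1.1, (deg s).1.2 + acc.1.2),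
                        (deg s).2 + acc.2)) ((0, 0), 0) w.

Definition lin_comb_of (B : algType k) (G : Type) (g : G -> B)
    (P : seq G -> Prop) (b : B) : Prop :=
  exists s : seq (k * seq G),
    (forall p, (exists s1 s2, s = s1 ++ p :: s2) -> P p.2) /\
    b = \sum_(p <- s) p.1 *: word_val g p.2.

Definition spanned (B : algType k) (G : Type) (g : G -> B) : Prop :=
  forall b : B, lin_comb_of g (fun _ => True) b.

Definition homog_piece (B : algType k) (G : Type) (g : G -> B)
    (deg : G -> tdeg) (n : tdeg) (b : B) : Prop :=
  lin_comb_of g (fun w => wdeg deg w = n) b.

(* (B, g) is the k-algebra presented by generators G and relations rel:
   the relations hold, the generators generate, and every family in any
   k-algebra satisfying the relations extends to an algebra morphism *)
Definition presents (G : Type) (rel : forall C : algType k, (G -> C) -> Prop)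
    (B : algType k) (g : G -> B) : Prop :=
  rel B g /\ spanned g /\
  (forall (C : algType k) (h : G -> C), rel C h ->
     exists f : B -> C, is_alg_hom f /\ forall s, f (g s) = h s).

Definition graded_derivation (B : algType k) (G : Type) (g : G -> B)
    (deg : G -> tdeg) (d : B -> B) : Prop :=
  (forall (c : k) (x y : B), d (c *: x + y) = c *: d x + d y) /\
  (forall (n : tdeg) (x y : B), homog_piece g deg n x ->
     d (x * y) = d x * y + (-1) ^+ (absz n.1.1) * (x * d y)).

End Presentations.

(* AV i   = constant path (i),             i = 0..r
   AR i   = arrow (i|i+1) : i -> i+1,      i = 0..r-1
   AL i   = arrow (i+1|i) : i+1 -> i,      i = 0..r-1
   ATh    = loop theta at 0.
   Path convention: (i|j)(j|l) = (i|j|l), so (i|j) = (i)(i|j)(j). *)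
Inductive AGen (r : nat) : Type :=
| AV of 'I_r.+1 | AR of 'I_r | AL of 'I_r | ATh.
Arguments ATh {r}.

Definition vlo (r : nat) (i : 'I_r) : 'I_r.+1 := widen_ord (leqnSn r) i.
Definition vhi (r : nat) (i : 'I_r) : 'I_r.+1 := lift ord0 i.

Definition relA (k : fieldType) (r : nat) (C : algType k) (x : AGen r -> C) : Prop :=
  (* path algebra of Q_r *)
  (forall i j : 'I_r.+1, x (AV i) * x (AV j) = if i == j then x (AV i) else 0) /\
  (\sum_(i < r.+1) x (AV i) = 1) /\
  (forall i : 'I_r, x (AR i) = x (AV (vlo i)) * x (AR i) * x (AV (vhi i))) /\
  (forall i : 'I_r, x (AL i) = x (AV (vhi i)) * x (AL i) * x (AV (vlo i))) /\
  (x ATh = x (AV ord0) * x ATh * x (AV ord0)) /\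
  (* (v|v-1|v) = (v|v+1|v) for 0 < v < r  (here v = j = i+1) *)
  (forall i j : 'I_r, val j = (val i).+1 ->
     x (AL i) * x (AR i) = x (AR j) * x (AL j)) /\
  (forall i : 'I_r, val i = 0%N ->
     x ATh * (x (AR i) * x (AL i)) = (x (AR i) * x (AL i)) * x ATh) /\
  (x ATh * x ATh = 0).

Definition degA (r : nat) (s : AGen r) : tdeg :=
  match s with
  | AV _ => ((0, 0), 0)
  | AR _ => ((0, 1), 0)
  | AL _ => ((0, 1), 0)
  | ATh => ((1, 0), 2)
  end.

(* Diagrams read bottom to top; product x * y = x stacked ON TOP of y.
   TE v   = idempotent e_v (black strand immediately right of the v-th red strand,
            v = 0: immediately right of the blue strand),   v = 0..r
   TCl i  = c_{i+1}^<- : from e_{i+1} (bottom) to e_i (top), i = 0..r-1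
   TCr i  = c_{i+1}^-> : from e_i (bottom) to e_{i+1} (top), i = 0..r-1
   TY v   = dot on the black strand in e_v
   TOm    = nail omega on the black strand in e_0 *)
Inductive TGen (r : nat) : Type :=
| TE of 'I_r.+1 | TCl of 'I_r | TCr of 'I_r | TY of 'I_r.+1 | TOm.
Arguments TOm {r}.

Definition relT (k : fieldType) (r : nat) (C : algType k) (x : TGen r -> C) : Prop :=
  (forall i j : 'I_r.+1, x (TE i) * x (TE j) = if i == j then x (TE i) else 0) /\
  (\sum_(i < r.+1) x (TE i) = 1) /\
  (forall i : 'I_r, x (TCl i) = x (TE (vlo i)) * x (TCl i) * x (TE (vhi i))) /\
  (forall i : 'I_r, x (TCr i) = x (TE (vhi i)) * x (TCr i) * x (TE (vlo i))) /\
  (forall v : 'I_r.+1, x (TY v) = x (TE v) * x (TY v) * x (TE v)) /\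
  (x TOm = x (TE ord0) * x TOm * x (TE ord0)) /\
  (* dots slide through black/red crossings *)
  (forall i : 'I_r, x (TY (vlo i)) * x (TCl i) = x (TCl i) * x (TY (vhi i))) /\
  (forall i : 'I_r, x (TY (vhi i)) * x (TCr i) = x (TCr i) * x (TY (vlo i))) /\
  (* black/red double crossing = dot *)
  (forall i : 'I_r, x (TCl i) * x (TCr i) = x (TY (vlo i))) /\
  (forall i : 'I_r, x (TCr i) * x (TCl i) = x (TY (vhi i))) /\
  (* the dot slides through the nail *)
  (x TOm * x (TY ord0) = x (TY ord0) * x TOm) /\
  (x TOm * x TOm = 0).

Definition degT (r : nat) (s : TGen r) : tdeg :=
  match s with
  | TE _ => ((0, 0), 0)
  | TCl _ => ((0, 1), 0)
  | TCr _ => ((0, 1), 0)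
  | TY _ => ((0, 2), 0)
  | TOm => ((1, 0), 2)
  end.

(* Main.v *)
Require Import Defs.
From HB Require Import structures.
From mathcomp Require Import all_boot all_order all_algebra zify.
Set Implicit Arguments. Unset Strict Implicit. Unset Printing Implicit Defensive.
Import GRing.Theory.
Local Open Scope ring_scope.

Section Gen.
Variable k : fieldType.

Definition islin (B C : algType k) (L : B -> C) :=
  forall (c : k) (x y : B), L (c *: x + y) = c *: L x + L y.

Lemma lin0 (B C : algType k) (L : B -> C) : islin L -> L 0 = 0.
Proof.
move=> H; have H1 := H 1 0 0; rewrite !scale1r addr0 in H1.
by apply: (@addrI _ (L 0)); rewrite addr0 -H1.
Qed.

Lemma linD (B C : algType k) (L : B -> C) : islin L -> forall x y, L (x + y) = L x + L y.
Proof. by move=> H x y; have := H 1 x y; rewrite !scale1r. Qed.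

Lemma linZ (B C : algType k) (L : B -> C) : islin L -> forall c x, L (c *: x) = c *: L x.
Proof. by move=> H c x; rewrite -[c *: x]addr0 H lin0 // addr0. Qed.

Lemma linN (B C : algType k) (L : B -> C) : islin L -> forall x, L (- x) = - L x.
Proof. by move=> H x; rewrite -scaleN1r linZ // scaleN1r. Qed.

Lemma lin_sum (B C : algType k) (L : B -> C) (I : Type) (s : seq I) (c : I -> k) (X : I -> B) :
  islin L -> L (\sum_(p <- s) c p *: X p) = \sum_(p <- s) c p *: L (X p).
Proof.
move=> H; elim: s => [|p s IH]; first by rewrite !big_nil lin0.
by rewrite !big_cons H IH.
Qed.

Lemma hom_islin (B C : algType k) (f : B -> C) : is_alg_hom f -> islin f.
Proof. by case. Qed.

Lemma hom_wv (B C : algType k) G G' (g : G -> B) (g' : G' -> C) (f : B -> C) (F : G -> seq G') :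
  is_alg_hom f -> (forall s, f (g s) = word_val g' (F s)) ->
  forall w, f (word_val g w) = word_val g' (flatten (map F w)).
Proof.
move=> [_ [H1 HM]] HF; elim => [|s w IH]; first by rewrite /word_val !big_nil H1.
by rewrite /word_val big_cons /= big_cat HM -/(word_val _ _) IH HF.
Qed.

Lemma wdeg_cat G (deg : G -> tdeg) (w1 w2 : seq G) :
  wdeg deg (w1 ++ w2) = let: (a, b) := (wdeg deg w1, wdeg deg w2) in
    ((a.1.1 + b.1.1, a.1.2 + b.1.2), a.2 + b.2).
Proof.
elim: w1 => [|s w IH] /=.
  by case: (wdeg deg w2) => [[x y] z]; rewrite !add0r.
by rewrite IH /= !addrA.
Qed.

Lemma wdeg_flat G G' (deg : G -> tdeg) (deg' : G' -> tdeg) (F : G -> seq G') :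
  (forall s, wdeg deg' (F s) = deg s) ->
  forall w, wdeg deg' (flatten (map F w)) = wdeg deg w.
Proof.
move=> HF; elim => [|s w IH] //=.
by rewrite wdeg_cat IH HF.
Qed.

Lemma split_map (I J : Type) (F : I -> J) (s : seq I) s1 p s2 :
  map F s = s1 ++ p :: s2 -> exists s1' s2' p0, s = s1' ++ p0 :: s2' /\ p = F p0.
Proof.
elim: s1 s => [|x s1 IH] [|y s] //=.
  by case=> <- _; exists [::], s, y.
case=> _ /IH [s1' [s2' [p0 [-> ->]]]].
by exists (y :: s1'), s2', p0.
Qed.

Lemma lc_transport (B C : algType k) G G' (g : G -> B) (g' : G' -> C) (f : B -> C)
  (F : G -> seq G') (P : seq G -> Prop) (P' : seq G' -> Prop) :
  is_alg_hom f -> (forall s, f (g s) = word_val g' (F s)) ->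
  (forall w, P w -> P' (flatten (map F w))) ->
  forall b, lin_comb_of g P b -> lin_comb_of g' P' (f b).
Proof.
move=> Hf HF HP b [s [Hs ->]].
exists (map (fun p => (p.1, flatten (map F p.2))) s); split.
  move=> p /= [s1 [s2 E0]]; have [s1' [s2' [p0 [E ->]]]] := split_map E0 => /=.
  by apply: HP; apply: Hs; exists s1', s2'.
rewrite lin_sum; last exact: hom_islin.
rewrite big_map; apply: eq_bigr => p _ /=.
by rewrite (hom_wv Hf HF).
Qed.

Lemma hom_id (B : algType k) G (g : G -> B) (f : B -> B) :
  is_alg_hom f -> (forall s, f (g s) = g s) -> spanned g -> forall b, f b = b.
Proof.
move=> Hf Hg Hsp b; case: (Hsp b) => s [_ ->].
rewrite lin_sum; last exact: hom_islin.
apply: eq_bigr => p _; congr (_ *: _).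
rewrite (hom_wv (g' := g) (F := fun s => [:: s]) Hf); last first.
  by move=> x; rewrite /word_val big_cons big_nil mulr1.
by elim: p.2 => //= x w IH; rewrite /word_val !big_cons -!/(word_val _ _) IH.
Qed.

Lemma hom_comp (B C D : algType k) (f : B -> C) (h : C -> D) :
  is_alg_hom f -> is_alg_hom h -> is_alg_hom (h \o f).
Proof.
move=> [L1 [O1 M1]] [L2 [O2 M2]]; split; last split.
- by move=> c x y /=; rewrite L1 L2.
- by rewrite /= O1 O2.
- by move=> x y /=; rewrite M1 M2.
Qed.

Lemma homog_word (B : algType k) G (g : G -> B) (deg : G -> tdeg) w :
  homog_piece g deg (wdeg deg w) (word_val g w).
Proof.
exists [:: (1, w)]; split.
  by move=> p [[|x [|y s1]] [s2 /= E]]; case: E => // <-.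
by rewrite big_cons big_nil scale1r addr0.
Qed.

Lemma homog_gen (B : algType k) G (g : G -> B) (deg : G -> tdeg) s :
  homog_piece g deg (deg s) (g s).
Proof.
have := homog_word g deg [:: s].
rewrite /word_val big_cons big_nil mulr1 /=.
by case: (deg s) => [[x y] z] /=; rewrite !addr0.
Qed.

Lemma hom_sign (B C : algType k) (f : B -> C) : is_alg_hom f ->
  forall n x, f ((-1) ^+ n * x) = (-1) ^+ n * f x.
Proof.
move=> Hf; elim => [|n IH] x; first by rewrite !expr0 !mul1r.
rewrite !exprS -!mulrA !mulN1r linN ?IH //; exact: hom_islin.
Qed.

Lemma der1 (B : algType k) G (g : G -> B) deg d : graded_derivation g deg d -> d 1 = 0.
Proof.
move=> [_ H]; have := homog_word g deg [::].
rewrite /word_val big_nil => /(H _ _ 1) /=; rewrite expr0 !mul1r mulr1 => E.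
by apply: (@addrI _ (d 1)); rewrite addr0 -E.
Qed.

Lemma lin_eq_span (B C : algType k) G (g : G -> B) (L1 L2 : B -> C) :
  islin L1 -> islin L2 -> (forall w, L1 (word_val g w) = L2 (word_val g w)) ->
  spanned g -> forall x, L1 x = L2 x.
Proof.
move=> H1 H2 Hw Hsp x; case: (Hsp x) => s [_ ->].
rewrite (lin_sum _ _ _ H1) (lin_sum _ _ _ H2).
by apply: eq_bigr => p _; rewrite Hw.
Qed.

Lemma wv1 (B : algType k) G (g : G -> B) s : word_val g [:: s] = g s.
Proof. by rewrite /word_val big_cons big_nil mulr1. Qed.

Lemma wv2 (B : algType k) G (g : G -> B) s1 s2 : word_val g [:: s1; s2] = g s1 * g s2.
Proof. by rewrite /word_val !big_cons big_nil mulr1. Qed.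

Lemma wdeg1 G (deg : G -> tdeg) s : wdeg deg [:: s] = deg s.
Proof. by rewrite /=; case: (deg s) => [[x y] z] /=; rewrite !addr0. Qed.

Lemma sand (B : algType k) (e f u w : B) :
  e * e = e -> u = e * u * f -> w = f * w * e -> e * (u * w) * e = u * w.
Proof.
move=> ee Hu Hw.
have eu : e * u = u by rewrite {1}Hu !mulrA ee -Hu.
have we : w * e = w by rewrite {1}Hw -mulrA ee -Hw.
by rewrite mulrA eu -mulrA we.
Qed.

End Gen.
Definition fA r (s : AGen r) : TGen r :=
  match s with AV i => TE i | AR i => TCl i | AL i => TCr i | ATh => TOm end.
Definition yw r (v : 'I_r.+2) : seq (AGen r.+1) :=
  if (v < r.+1)%N then [:: AR (inord v); AL (inord v)] else [:: AL ord_max; AR ord_max].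
Definition gT r (s : TGen r.+1) : seq (AGen r.+1) :=
  match s with TE i => [:: AV i] | TCl i => [:: AR i] | TCr i => [:: AL i]
  | TY v => yw v | TOm => [:: ATh] end.

Lemma ordE n (x y : 'I_n) : nat_of_ord x = nat_of_ord y -> x = y.
Proof. exact: val_inj. Qed.

Theorem proposition7p2 (k : fieldType) (r : nat) (hr : (0 < r)%N)
    (A : algType k) (a : AGen r -> A) (HA : presents (@relA k r) a)
    (T : algType k) (t : TGen r -> T) (HT : presents (@relT k r) t) :
  exists phi : A -> T,
    [/\ is_alg_hom phi /\ bijective phi,
        (forall i, phi (a (AV i)) = t (TE i)) /\
        (forall i, phi (a (AR i)) = t (TCl i)) /\
        (forall i, phi (a (AL i)) = t (TCr i)) /\
        phi (a ATh) = t TOm,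
        (forall (n : tdeg) (x : A),
           homog_piece a (@degA r) n x <-> homog_piece t (@degT r) n (phi x)),
        (forall x : A, phi ((fun _ : A => 0) x) = (fun _ : T => 0) (phi x)) &
        (forall (dA : A -> A) (dT : T -> T),
           graded_derivation a (@degA r) dA ->
           (forall i, dA (a (AV i)) = 0) -> (forall i, dA (a (AR i)) = 0) ->
           (forall i, dA (a (AL i)) = 0) ->
           dA (a ATh) = a (AR (Ordinal hr)) * a (AL (Ordinal hr)) ->
           graded_derivation t (@degT r) dT ->
           (forall i, dT (t (TE i)) = 0) -> (forall i, dT (t (TCl i)) = 0) ->
           (forall i, dT (t (TCr i)) = 0) -> (forall i, dT (t (TY i)) = 0) ->
           dT (t TOm) = t (TY ord0) ->
           forall x : A, phi (dA x) = dT (phi x))].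
Proof.
move: hr a HA t HT; case: r => [//|r] hr a HA t HT.
case: HA => [RA [spA uA]]; case: HT => [RT [spT uT]].
have RT0 := RT.
case: RT0 => [T1 [T2 [T3 [T4 [T5 [T6 [T7 [T8 [T9 [T10 [T11 T12]]]]]]]]]]].
have RA0 := RA.
case: RA0 => [A1 [A2 [A3 [A4 [A5 [A6 [A7 A8]]]]]]].
have vh : forall i : 'I_r.+1, (vhi i : nat) = i.+1 by move=> i; rewrite /vhi lift0.
have RA' : relA (fun s => t (fA s)).
  rewrite /relA /=; do 5 (split; first by []).
  split; first by move=> i j hij; rewrite T10 T9; congr (t (TY _)); apply: ordE; rewrite vh; by move: hij => /= ->.
  split; last exact: T12.
  move=> i hi; rewrite T9; have -> : vlo i = ord0 by apply: ordE.
  exact: T11.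
have [phi [hphi phiE]] := uA _ _ RA'.
pose h := fun s => word_val a (gT s).
have yvlo : forall i : 'I_r.+1, word_val a (yw (vlo i)) = a (AR i) * a (AL i).
  move=> i; rewrite /yw /= ltn_ord wv2.
  by have -> : inord (vlo i) = i by apply: ordE; rewrite /= inordK.
have yvhi : forall i : 'I_r.+1, word_val a (yw (vhi i)) = a (AL i) * a (AR i).
  move=> i; rewrite /yw vh; case: ifP => hlt; rewrite wv2.
    have hj : nat_of_ord (inord i.+1 : 'I_r.+1) = i.+1 by rewrite inordK.
    by rewrite (A6 i (inord i.+1) hj).
  suff -> : i = ord_max by [].
  apply: ordE => /=; move: (ltn_ord i) hlt; rewrite !ltnS => h1 /negbT; rewrite -leqNgt => h2.
  by apply/eqP; rewrite eqn_leq h1.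
have vcase : forall v : 'I_r.+2, exists i, v = vlo i \/ v = vhi i.
  move=> v; case: (ltnP v r.+1) => hv.
    by exists (inord v); left; apply: ordE; rewrite /= inordK.
  exists ord_max; right; apply: ordE; rewrite vh /=; apply/eqP.
  by rewrite eqn_leq hv -ltnS ltn_ord.
have RT' : relT h.
  rewrite /relT /h /=; split; first by move=> i j; rewrite !wv1; exact: A1.
  split; first by rewrite -A2; apply: eq_bigr => i _; rewrite wv1.
  split; first by move=> i; rewrite !wv1; exact: A3.
  split; first by move=> i; rewrite !wv1; exact: A4.
  split.
    move=> v; rewrite wv1; have [i [->|->]] := vcase v; rewrite ?yvlo ?yvhi; symmetry; apply: sand.
    - by rewrite A1 eqxx.
    - exact: A3.
    - exact: A4.
    - by rewrite A1 eqxx.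
    - exact: A4.
    - exact: A3.
  split; first by rewrite !wv1; exact: A5.
  split; first by move=> i; rewrite wv1 yvlo yvhi !mulrA.
  split; first by move=> i; rewrite wv1 yvlo yvhi !mulrA.
  split; first by move=> i; rewrite !wv1 yvlo.
  split; first by move=> i; rewrite !wv1 yvhi.
  split; last by rewrite wv1.
  have e0 : (ord0 : 'I_r.+2) = vlo (ord0 : 'I_r.+1) by apply: ordE.
  by rewrite wv1 e0 yvlo; apply: A7.
have [psi [hpsi psiE]] := uT _ _ RT'.
have phiW : forall s, phi (a s) = word_val t [:: fA s] by move=> s; rewrite wv1 phiE.
have psiphi : forall x, psi (phi x) = x.
  apply: (hom_id (g := a) (hom_comp hphi hpsi)) => // s /=.
  by rewrite phiE psiE /h; case: s => * /=; rewrite wv1.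
have phipsi : forall x, phi (psi x) = x.
  apply: (hom_id (g := t) (hom_comp hpsi hphi)) => // s /=.
  rewrite psiE /h (hom_wv hphi phiW).
  case: s => [i|i|i|v|] /=; rewrite ?wv1 //.
  rewrite /yw; case: ifP => hv /=; rewrite wv2.
    by rewrite T9; congr (t (TY _)); apply: ordE; rewrite /= inordK.
  rewrite T10; congr (t (TY _)); apply: ordE; rewrite vh /=; apply/eqP.
  move: (ltn_ord v) hv => h1 h2; apply/eqP; lia.
have degfA : forall s, wdeg (@degT r.+1) [:: fA s] = degA s.
  by move=> s; rewrite wdeg1; case: s.
have deggT : forall s, wdeg (@degA r.+1) (gT s) = degT s.
  move=> s; case: s => [i|i|i|v|] //=; rewrite /yw; by case: ifP.
exists phi; split.
- by split => //; exists psi.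
- by split; [|split; [|split]] => *; rewrite phiE.
- move=> n x; split.
    apply: (lc_transport hphi phiW) => w <-; exact: wdeg_flat.
  move=> H; rewrite -(psiphi x).
  have psiW : forall s, psi (t s) = word_val a (gT s) by move=> s; rewrite psiE.
  by apply: (lc_transport hpsi psiW _ H) => w <-; apply: wdeg_flat.
- by move=> x /=; rewrite lin0 //; apply: hom_islin.
move=> dA dT HdA hAV hAR hAL hATh HdT hTE hTCl hTCr hTY hTOm.
have L1 : islin (phi \o dA).
  by move=> c x y /=; rewrite HdA.1 (hom_islin hphi).
have L2 : islin (dT \o phi).
  by move=> c x y /=; rewrite (hom_islin hphi) HdT.1.
have key1 : forall s, phi (dA (a s)) = dT (t (fA s)).
  case=> [i|i|i|] /=; rewrite ?hAV ?hAR ?hAL ?hTE ?hTCl ?hTCr ?lin0 //; try exact: hom_islin.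
  rewrite hATh hTOm hphi.2.2 !phiE /= T9; congr (t (TY _)); exact: val_inj.
have key2 : forall s : AGen r.+1, degT (fA s) = degA s by case.
have hM := hphi.2.2.
apply: (lin_eq_span L1 L2) => // w; elim: w => [|s w IH] /=.
  rewrite /word_val big_nil (der1 HdA) hphi.2.1 (der1 HdT).
  by apply: lin0; apply: hom_islin.
rewrite /word_val big_cons -!/(word_val _ _).
rewrite (HdA.2 _ _ _ (homog_gen a (@degA _) s)).
rewrite linD; last exact: hom_islin.
have IH2 : phi (dA (word_val a w)) = dT (phi (word_val a w)) := IH.
rewrite (hom_sign hphi) !hM IH2 key1 !phiE.
rewrite (HdT.2 _ _ _ (homog_gen t (@degT _) (fA s))) key2.
by [].
Qed.
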